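(* Let $G$ be a cograph. A coloring $\sigma$ of $G$ is recursively minimal if and only if it is an hc-coloring.
   Context: All graphs are finite, simple and undirected. A (proper vertex) coloring of $G=(V,E)$ is a surjective map $\sigma:V\to S$ with $\sigma(x)\neq\sigma(y)$ whenever $xy\in E$; $\chi(G)$ is the chromatic number. A cograph is a graph that is $K_1$, or a disjoint union of cographs, or a join of cographs. Color-minimal cographs are colored graphs $(G,\sigma)$ ($\sigma$ a proper coloring) defined recursively: $(G,\sigma)$ is color-minimal if $|\sigma(V)|=\chi(G)$ and either $G=K_1$, or $G$ is the disjoint union, or the join, of at least two graphs $G_i$ such that each $(G_i,\sigma|_{V(G_i)})$ is a color-minimal cograph. A coloring $\sigma$ of $G$ is recursively minimal if $(G,\sigma)$ is a color-minimal cograph. A cotree $(T,t)$ of a cograph $G$ is a rooted tree $T$ with leaf set $V$ and a labeling $t:V^0(T)\to\{0,1\}$ of its inner vertices such that for every inner vertex $u$, $G(u):=G[L(T(u))]$ (with $L(T(u))$ the leaves descending from $u$) is the disjoint union (if $t(u)=0$) or the join (if $t(u)=1$) of the graphs $G(v)$, $v$ a child of $u$. It is binary if every inner vertex has exactly two children. A coloring $\sigma$ is an hc-coloring with respect to a binary cotree $(T,t)$ if for every inner vertex $u$ with children $v_1,v_2$: if $t(u)=1$ then $\sigma(L(T(v_1)))\cap\sigma(L(T(v_2)))=\emptyset$, and if $t(u)=0$ then one of $\sigma(L(T(v_1)))$, $\sigma(L(T(v_2)))$ contains the other. A coloring of $G$ is an hc-coloring of $G$ if it is an hc-coloring with respect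 to some binary cotree of $G$. *)

(* Defs.v *)
From mathcomp Require Import all_boot.
Set Implicit Arguments. Unset Strict Implicit. Unset Printing Implicit Defensive.

(* A simple graph is a finite type T with a symmetric irreflexive relation e.
   Subgraphs G[A] are handled through vertex sets A : {set T}. *)
Section Cographs.
Variables (T : finType) (e : rel T).

Definition colorable (A : {set T}) (k : nat) : bool :=
  [exists f : {ffun T -> 'I_k},
     [forall x in A, forall y in A, e x y ==> (f x != f y)]].

(* chromatic number of G[A] (any proper coloring uses at most #|T| colors) *)
Definition chi (A : {set T}) : nat :=
  \big[minn/#|T|]_(k < #|T|.+1 | colorable A k) k.

Definition is_union_of (P : {set {set T}}) : bool :=
  [forall B in P, forall C in P,
     (B != C) ==> [forall x in B, forall y in C, ~~ e x y]].
Definition is_join_of (P : {set {set T}}) : bool :=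
  [forall B in P, forall C in P,
     (B != C) ==> [forall x in B, forall y in C, e x y]].

Inductive cograph : {set T} -> Prop :=
| cograph_K1 (x : T) : cograph [set x]
| cograph_op (P : {set {set T}}) (A : {set T}) :
    partition P A -> 1 < #|P| -> (is_union_of P \/ is_join_of P) ->
    (forall B, B \in P -> cograph B) -> cograph A.

Variable S : finType.

Definition coloring (s : T -> S) : Prop :=
  (forall x y, e x y -> s x != s y) /\ (forall c : S, exists x, s x = c).

Inductive color_minimal (s : T -> S) : {set T} -> Prop :=
| cm_K1 (x : T) : #|s @: [set x]| = chi [set x] -> color_minimal s [set x]
| cm_op (P : {set {set T}}) (A : {set T}) :
    #|s @: A| = chi A ->
    partition P A -> 1 < #|P| -> (is_union_of P \/ is_join_of P) ->
    (forall B, B \in P -> color_minimal s B) -> color_minimal s A.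

Definition recursively_minimal (s : T -> S) : Prop :=
  color_minimal s [set: T].

(* binary rooted trees with leaves in T and inner labels in bool
   (true = 1 = join, false = 0 = disjoint union) *)
Inductive btree : Type :=
| BLeaf of T
| BNode of bool & btree & btree.

Fixpoint leaves (t : btree) : seq T :=
  match t with
  | BLeaf v => [:: v]
  | BNode _ l r => leaves l ++ leaves r
  end.

Fixpoint cotree_nodes_ok (t : btree) : Prop :=
  match t with
  | BLeaf _ => True
  | BNode b l r =>
      [/\ cotree_nodes_ok l, cotree_nodes_ok r &
          forall x y, x \in leaves l -> y \in leaves r -> e x y = b]
  end.

Definition binary_cotree (t : btree) : Prop :=
  [/\ uniq (leaves t), (forall v : T, v \in leaves t) & cotree_nodes_ok t].

Definition leafset (t : btree) : {set T} := [set x | x \in leaves t].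

Fixpoint hc_wrt (s : T -> S) (t : btree) : Prop :=
  match t with
  | BLeaf _ => True
  | BNode b l r =>
      [/\ hc_wrt s l, hc_wrt s r &
          if b then [disjoint s @: leafset l & s @: leafset r]
          else (s @: leafset l \subset s @: leafset r) ||
               (s @: leafset r \subset s @: leafset l)]
  end.

Definition hc_coloring (s : T -> S) : Prop :=
  exists t, binary_cotree t /\ hc_wrt s t.

End Cographs.

(* Main.v *)
Require Import Defs.
From mathcomp Require Import all_boot.
From mathcomp Require Import zify.
Set Implicit Arguments. Unset Strict Implicit. Unset Printing Implicit Defensive.

Lemma disjointP (X : finType) (A B : {set X}) :
  reflect (forall x, x \in A -> x \in B -> False) [disjoint A & B].
Proof.
rewrite -setI_eq0; apply: (iffP eqP) => [H x xA xB | H].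
- have : x \in A :&: B by rewrite inE xA xB.
  by rewrite H inE.
- apply/setP => x; rewrite !inE; apply/negbTE/negP => /andP [xA xB].
  exact: H xA xB.
Qed.

Section Proof.
Variables (T S : finType) (e : rel T) (s : T -> S).
Hypothesis proper : forall x y, e x y -> s x != s y.
Hypothesis esym : symmetric e.

Definition propc (X : finType) (f : T -> X) (A : {set T}) :=
  forall x y, x \in A -> y \in A -> e x y -> f x != f y.

Lemma colorableP A k :
  reflect (exists f : {ffun T -> 'I_k}, propc f A) (colorable e A k).
Proof.
apply: (iffP existsP) => [[f /forallP Hf]|[f Hf]]; exists f.
- move=> x y xA yA exy; have := Hf x; rewrite xA /= => /forallP /(_ y).
  by rewrite yA exy.
- apply/forallP => x; apply/implyP => xA; apply/forallP => y.
  apply/implyP => yA; apply/implyP => exy; exact: Hf.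
Qed.

Lemma bigmin_le (I : eqType) (r : seq I) (P : pred I) (F : I -> nat) idx j :
  j \in r -> P j -> \big[minn/idx]_(i <- r | P i) F i <= F j.
Proof.
elim: r => // a r IH; rewrite inE big_cons => /orP [/eqP <- -> | jr Pj].
- exact: geq_minl.
- case: ifP => _; last exact: IH.
  by apply: leq_trans (geq_minr _ _) (IH jr Pj).
Qed.

Lemma chi_le (A : {set T}) k : colorable e A k -> chi e A <= k.
Proof.
move=> Hc; rewrite /chi.
have [kT|kT] := leqP k #|T|.
- have kT' : k < #|T|.+1 by rewrite ltnS.
  exact: (@bigmin_le _ _ (fun i : 'I_#|T|.+1 => colorable e A i) (fun i => nat_of_ord i) _ (Ordinal kT') (mem_index_enum _) Hc).
- apply: leq_trans (ltnW kT).
  apply: (big_ind (fun x => x <= #|T|)) => //; first by move=> x y; lia.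
  by move=> i _; rewrite -ltnS.
Qed.

Lemma chi_col (A : {set T}) : colorable e A (chi e A).
Proof.
rewrite /chi; apply: (big_ind (colorable e A)) => //.
- apply/colorableP; exists [ffun x => enum_rank x] => x y _ _ exy; rewrite !ffunE.
  apply: contraTneq exy => /enum_rank_inj ->.
  by apply/negP => /proper; rewrite eqxx.
- by move=> x y Hx Hy; rewrite /minn; case: ifP.
Qed.

Lemma chi_img (X : finType) (f : T -> X) (A : {set T}) :
  A != set0 -> propc f A -> chi e A <= #|f @: A|.
Proof.
move=> /set0Pn [a aA] Hf.
set k := #|f @: A|.
have k0 : 0 < k by apply/card_gt0P; exists (f a); apply: imset_f.
apply: chi_le; apply/colorableP.
have fe : forall y, y \in A -> f y \in enum (f @: A).
  by move=> y yA; rewrite (mem_enum (f @: A)) imset_f.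
pose g x : 'I_k := insubd (Ordinal k0) (index (f x) (enum (f @: A))).
have gv x : x \in A -> val (g x) = index (f x) (enum (f @: A)).
  move=> xA; rewrite /g insubdK // -[_ \in _]/(_ < _) /k cardE index_mem; exact: (fe x xA).
exists [ffun x => g x] => x y xA yA exy; rewrite !ffunE.
apply: contraNneq (Hf x y xA yA exy) => /(congr1 val).
rewrite !gv // => H; apply/eqP; exact: (index_inj (f x) (fe x xA) (fe y yA) H).
Qed.

Lemma chi_s (A : {set T}) : A != set0 -> chi e A <= #|s @: A|.
Proof. move=> An; apply: chi_img => // x y _ _; exact: proper. Qed.

Lemma chi_sub (B A : {set T}) : B != set0 -> B \subset A -> chi e B <= chi e A.
Proof.
move=> Bn BA; have /colorableP [g Hg] := chi_col A.
apply: leq_trans (chi_img (f := g) Bn _) _.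
- move=> x y xB yB; apply: Hg; exact: (subsetP BA).
- by apply: leq_trans (max_card _) _; rewrite card_ord.
Qed.

Lemma chi_join (L R : {set T}) : L != set0 -> R != set0 ->
  (forall x y, x \in L -> y \in R -> e x y) ->
  chi e L + chi e R <= chi e (L :|: R).
Proof.
move=> Ln Rn LR; have /colorableP [g Hg] := chi_col (L :|: R).
have HL : propc g L by move=> x y xL yL; apply: Hg; rewrite inE ?xL ?yL.
have HR : propc g R by move=> x y xL yL; apply: Hg; rewrite inE ?xL ?yL ?orbT.
have dis : [disjoint g @: L & g @: R].
  apply/disjointP => c /imsetP [x xL ->] /imsetP [y yR /eqP]; apply/negP.
  apply: Hg; rewrite ?inE ?xL ?yR ?orbT //; exact: LR.
apply: leq_trans (leq_add (chi_img Ln HL) (chi_img Rn HR)) _.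
have := leq_card_setU (g @: L) (g @: R); rewrite dis => [[_ /eqP <-]].
rewrite -imsetU; apply: leq_trans (max_card _) _; by rewrite card_ord.
Qed.

Lemma chi1 x : chi e [set x] = 1.
Proof.
apply/eqP; rewrite eqn_leq; apply/andP; split.
- by apply: leq_trans (chi_s _) _; rewrite ?imset_set1 ?cards1 // -card_gt0 cards1.
- have /colorableP [f _] := chi_col [set x].
  case: (chi e [set x]) f => // f; by case: (f x).
Qed.

Lemma mk_op b (P : {set {set T}}) :
  (forall B C x y, B \in P -> C \in P -> B != C -> x \in B -> y \in C -> e x y = b) ->
  (if b then is_join_of e P else is_union_of e P).
Proof.
move=> H; case: b H => H; apply/forallP => B; apply/implyP => BP;
apply/forallP => C; apply/implyP => CP; apply/implyP => BC;
apply/forallP => x; apply/implyP => xB; apply/forallP => y; apply/implyP => yC;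
by rewrite (H B C x y).
Qed.

Lemma op_edges b (P : {set {set T}}) :
  (if b then is_join_of e P else is_union_of e P) ->
  (forall B C x y, B \in P -> C \in P -> B != C -> x \in B -> y \in C -> e x y = b).
Proof.
move=> H B C x y BP CP BC xB yC; case: b H => /forallP /(_ B); rewrite BP /=;
move=> /forallP /(_ C); rewrite CP BC /= => /forallP /(_ x); rewrite xB /=;
move=> /forallP /(_ y); rewrite yC /=; [done | by move/negbTE].
Qed.

Lemma cm_card (A : {set T}) : color_minimal e s A -> #|s @: A| = chi e A.
Proof. by case. Qed.

Lemma leaves_ex (t : btree T) : exists v, v \in leaves t.
Proof.
elim: t => [v|b l [v Hv] r _]; first by exists v; rewrite inE.
by exists v; rewrite mem_cat Hv.
Qed.

Lemma hc_cm (t : btree T) : uniq (leaves t) -> cotree_nodes_ok e t -> hc_wrt s t ->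
  color_minimal e s (leafset t).
Proof.
elim: t => [v|b l IHl r IHr] /=.
- move=> _ _ _.
  have -> : leafset (BLeaf v) = [set v] by apply/setP=> y; rewrite !inE.
  by apply: cm_K1; rewrite imset_set1 cards1 chi1.
- rewrite cat_uniq => /and3P [ul dlr ur] [okl okr elr] [hl hr hb].
  have eA : leafset (BNode b l r) = leafset l :|: leafset r.
    by apply/setP => y; rewrite !inE mem_cat.
  rewrite eA; clear eA.
  have dis : [disjoint leafset l & leafset r].
    apply/disjointP => v; rewrite !inE => vl vr.
    by move/hasP: dlr; apply; exists v.
  have [vl Hvl] := leaves_ex l; have [vr Hvr] := leaves_ex r.
  have Ln : leafset l != set0 by apply/set0Pn; exists vl; rewrite inE.
  have Rn : leafset r != set0 by apply/set0Pn; exists vr; rewrite inE.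
  have neq : leafset l != leafset r.
    apply: contraTneq dis => ->; rewrite -setI_eq0 setIid //.
  have cml := IHl ul okl hl; have cmr := IHr ur okr hr.
  apply: (cm_op (P := [set leafset l; leafset r])).
  + apply/eqP; rewrite eqn_leq chi_s ?andbT; last first.
      by apply/set0Pn; case/set0Pn: Ln => v Hv; exists v; rewrite inE Hv.
    rewrite imsetU; case: b elr hb => elr hb.
    * have := leq_card_setU (s @: leafset l) (s @: leafset r).
      rewrite hb => [[_ /eqP ->]]; rewrite !cm_card //.
      apply: chi_join => // x y; rewrite !inE => xl yr; by rewrite elr.
    * case/orP: hb => /setUidPl; [rewrite setUC|] => ->; rewrite cm_card //;
      apply: chi_sub => //; by rewrite ?subsetUl ?subsetUr.
  + rewrite /partition; apply/and3P; split.
    * apply/eqP/setP => v; apply/bigcupP/setUP.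
      -- by case=> B; rewrite !inE => /orP [] /eqP ->; rewrite inE; auto.
      -- by case=> H; [exists (leafset l)|exists (leafset r)]; rewrite // !inE eqxx ?orbT.
    * apply/trivIsetP => B C; rewrite !inE => /orP [] /eqP -> /orP [] /eqP -> //;
      rewrite ?eqxx // => _ //; by rewrite disjoint_sym.
    * by rewrite !inE !(eq_sym set0) negb_or Ln Rn.
  + by rewrite cards2 neq.
  + have H : forall B C x y, B \in [set leafset l; leafset r] ->
        C \in [set leafset l; leafset r] -> B != C -> x \in B -> y \in C -> e x y = b.
      move=> B C x y; rewrite !inE => /orP [] /eqP -> /orP [] /eqP -> //; rewrite ?eqxx //= => _;
      rewrite !inE => xB yC; [exact: elr | by rewrite esym elr].
    by move: (mk_op H); case: b {elr hb H}; [right|left].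
  + move=> B; rewrite !inE => /orP [] /eqP -> //.
Qed.

Definition tf (A : {set T}) (t : btree T) :=
  [/\ uniq (leaves t), forall v, (v \in leaves t) = (v \in A),
      cotree_nodes_ok e t & hc_wrt s t].

Definition Rb (b : bool) (B C : {set T}) :=
  [disjoint B & C] /\ (forall x y, x \in B -> y \in C -> e x y = b).

Lemma leafset_eq (t : btree T) (A : {set T}) : (forall v, (v \in leaves t) = (v \in A)) -> leafset t = A.
Proof. by move=> H; apply/setP => v; rewrite inE H. Qed.

Lemma combine b (Bs : seq {set T}) : uniq Bs ->
  {in Bs &, forall B C, B != C -> Rb b B C} ->
  (forall B, B \in Bs -> exists t, tf B t) ->
  forall A0 t0, tf A0 t0 -> (forall B, B \in Bs -> Rb b A0 B) ->
  (forall A' : {set T}, A0 \subset A' -> forall B, B \in Bs -> Rb b A' B ->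
     if b then [disjoint s @: A' & s @: B] else s @: B \subset s @: A') ->
  exists t, tf (A0 :|: \bigcup_(B <- Bs) B) t.
Proof.
elim: Bs => [|B1 Bs IH] /=.
  by move=> _ _ _ A0 t0 H _ _; rewrite big_nil setU0; exists t0.
move=> /andP [B1n uBs] HR Ht A0 t0 tf0 HA0 Hhc.
have [t1 tf1] := Ht B1 (mem_head _ _).
have [dis01 e01] := HA0 B1 (mem_head _ _).
have tfn : tf (A0 :|: B1) (BNode b t0 t1).
  case: tf0 tf1 => [u0 m0 ok0 h0] [u1 m1 ok1 h1]; split => /=.
  - rewrite cat_uniq u0 u1 /= andbT; apply/hasPn => v; rewrite m1 => vB1.
    rewrite m0; apply/negP => vA0; exact: (disjointP _ _ dis01 v vA0 vB1).
  - by move=> v; rewrite mem_cat m0 m1 inE.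
  - split => // x y; rewrite m0 m1; exact: e01.
  - split => //; rewrite (leafset_eq m0) (leafset_eq m1).
    have := Hhc A0 (subxx _) B1 (mem_head _ _) (HA0 _ (mem_head _ _)).
    by case: b {HR HA0 Hhc e01 IH} => // ->; rewrite orbT.
have := IH uBs _ _ (A0 :|: B1) _ tfn _ _; rewrite big_cons setUA; apply.
- move=> B C BB CC; apply: HR; by rewrite inE ?BB ?CC orbT.
- move=> B BB; apply: Ht; by rewrite inE BB orbT.
- move=> B BB; have BB' : B \in B1 :: Bs by rewrite inE BB orbT.
  have [d0 f0] := HA0 B BB'.
  have B1B : B1 != B by apply: contraNneq B1n => ->.
  have [d1 f1] := HR B1 B (mem_head _ _) BB' B1B.
  split.
  + apply/disjointP => v; rewrite inE => /orP [vA|vB1] vB.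
    * exact: (disjointP _ _ d0 v vA vB).
    * exact: (disjointP _ _ d1 v vB1 vB).
  + move=> x y; rewrite inE => /orP [xA|xB1] yB; [exact: f0 | exact: f1].
- move=> A' sub B BB; apply: Hhc; last by rewrite inE BB orbT.
  exact: subset_trans (subsetUl _ _) sub.
Qed.

Lemma union_max (P : {set {set T}}) (A0 B0 : {set T}) :
  partition P A0 -> is_union_of e P -> #|s @: A0| = chi e A0 -> B0 \in P ->
  (forall B, B \in P -> #|s @: B| <= #|s @: B0|) ->
  forall B, B \in P -> s @: B \subset s @: B0.
Proof.
move=> Hp Hu Hc B0P Hmax B BP.
have Hed := op_edges (b := false) Hu.
have cov := cover_partition Hp.
set m := #|s @: B0|.
have fe : forall (C : {set T}) y, y \in C -> s y \in enum (s @: C).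
  by move=> C y yC; rewrite (mem_enum (s @: C)) imset_f.
have idxlt : forall x, x \in A0 -> index (s x) (enum (s @: pblock P x)) < #|s @: pblock P x|.
  move=> x xA; rewrite cardE index_mem; apply: fe; by rewrite mem_pblock cov.
pose g x : 'I_(#|S|).+1 := inord (index (s x) (enum (s @: pblock P x))).
have gv : forall x, x \in A0 -> nat_of_ord (g x) = index (s x) (enum (s @: pblock P x)).
  move=> x xA; rewrite /g inordK // ltnS; apply: leq_trans (ltnW (idxlt x xA)) _.
  exact: max_card.
have A0n : A0 != set0.
  have := partitionS Hp B0P; have := partition_neq0 Hp B0P.
  case/set0Pn => v vB sub; apply/set0Pn; exists v; exact: (subsetP sub).
have pg : propc g A0.
  move=> x y xA yA exy.
  have xP : x \in cover P by rewrite cov.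
  have yP : y \in cover P by rewrite cov.
  have eqb : pblock P x = pblock P y.
    apply/eqP; apply: contraTT exy => neq.
    by rewrite (Hed _ _ x y (pblock_mem xP) (pblock_mem yP) neq) ?mem_pblock.
  apply: contraNneq (proper exy) => /(congr1 (@nat_of_ord _)); rewrite !gv // eqb => H.
  apply/eqP; apply: (index_inj (s x) _ _ H); apply: fe; [rewrite -eqb|]; by rewrite mem_pblock.
have c1 := chi_img A0n pg.
have c2 : #|g @: A0| <= m.
  have sub : g @: A0 \subset (fun i : 'I_m => (inord i : 'I_(#|S|).+1)) @: setT.
    apply/subsetP => c /imsetP [x xA ->].
    have lt : index (s x) (enum (s @: pblock P x)) < m.
      apply: leq_trans (idxlt x xA) _; apply: Hmax; apply: pblock_mem; by rewrite cov.
    by apply/imsetP; exists (Ordinal lt).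
  apply: leq_trans (subset_leq_card sub) _.
  by apply: leq_trans (leq_imset_card _ _) _; rewrite cardsT card_ord.
have sB0 : s @: B0 \subset s @: A0 by apply: imsetS; exact: partitionS Hp B0P.
have eq0 : s @: B0 = s @: A0.
  apply/eqP; rewrite eqEcard sB0 /= Hc; exact: leq_trans c1 c2.
rewrite eq0; apply: imsetS; exact: partitionS Hp BP.
Qed.

Lemma cm_tf (A : {set T}) : color_minimal e s A -> exists t, tf A t.
Proof.
elim => [x _ | P A0 Hc Hp HP1 Huj Hcm IH].
  by exists (BLeaf x); split => //= v; rewrite !inE.
have cov := cover_partition Hp.
have /trivIsetP trivP := partition_trivIset Hp.
have [B1 B1P] : exists B1, B1 \in P by apply/card_gt0P; apply: ltnW.
have [b [B0 [B0P Hb Hsub]]] : exists b B0, [/\ B0 \in P,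
    (if b then is_join_of e P else is_union_of e P) &
    forall B, B \in P -> ~~ b -> s @: B \subset s @: B0].
  case: Huj => [Hu|Hj]; last by exists true, B1.
  exists false.
  have [B0 B0P Hmax] := @arg_maxnP _ B1 (mem P) (fun B => #|s @: B|) B1P.
  exists B0; split => // B BP _; exact: (union_max Hp Hu Hc B0P Hmax BP).
have Hed := op_edges Hb.
have [t0 tf0] := IH B0 B0P.
have := @combine b (enum (P :\ B0)) (enum_uniq _) _ _ B0 t0 tf0 _ _.
have -> : B0 :|: \bigcup_(B <- enum (P :\ B0)) B = A0.
  rewrite big_enum -cov /cover (bigD1 B0 B0P) /=; congr (_ :|: _).
  by apply: eq_bigl => B; rewrite !inE andbC.
have memE : forall B, (B \in enum (P :\ B0)) = (B != B0) && (B \in P).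
  by move=> B; rewrite (mem_enum (P :\ B0)) !inE.
apply.
- move=> B C; rewrite !memE => /andP [_ BP] /andP [_ CP] BC; split.
  + exact: (trivP B C BP CP BC).
  + by move=> x y xB yC; apply: (Hed B C).
- move=> B; rewrite memE => /andP [_ BP]; exact: IH.
- move=> B; rewrite memE => /andP [BB0 BP].
  have B0B : B0 != B by rewrite eq_sym.
  split; first exact: (trivP B0 B B0P BP B0B).
  by move=> x y xB yC; apply: (Hed B0 B).
- move=> A' sub B; rewrite memE => /andP [_ BP] [_ HR].
  case: b {Hb Hed} Hsub HR => Hsub HR.
  + apply/disjointP => c /imsetP [x xA ->] /imsetP [y yB /eqP].
    by apply/negP; apply: proper; rewrite HR.
  + apply: subset_trans (Hsub B BP isT) _; exact: imsetS.
Qed.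

End Proof.

Theorem theorem9 (T S : finType) (e : rel T) (s : T -> S) :
  symmetric e -> irreflexive e ->
  cograph e [set: T] ->
  coloring e s ->
  (recursively_minimal e s <-> hc_coloring e s).
Proof.
move=> esym _ _ [proper _]; split.
- move=> /(cm_tf proper) [t [u m ok hc]].
  exists t; split => //; split => // v; by rewrite m inE.
- move=> [t [[u m ok] hc]].
  have := hc_cm proper esym u ok hc.
  rewrite /recursively_minimal (_ : leafset t = [set: T]) //.
  by apply/setP => v; rewrite !inE m.
Qed.
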